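(* For each $n\ge 0$ let $\mathbb{Z}_n$ be a $1$-Gray code for $\mathcal{Z}_n$ whose first word is $0(001)^\star$ and whose last word is $(001)^\star$. Define $\mathbb{W}^1_0$ as the list containing only the empty word, and for $n\ge1$, $\mathbb{W}^1_n=1\cdot\mathbb{W}^1_{n-1}\circ\mathbb{Z}_n$. Then for any $n\ge 1$, $\mathbb{W}^1_n$ is a $1$-Gray code for $\mathcal{W}^1_n$ whose first word is $1^n$ and whose last word is $(001)^\star$.
   Context: A binary word is $1$-decreasing if for every maximal run of $0$s, of length $a>0$, together with the (possibly empty) maximal run of $1$s immediately following it, of length $b$, one has $a>b$. $\mathcal{W}^1_n$ is the set of $1$-decreasing binary words of length $n$. For $n\ge1$, $\mathcal{Z}_n$ is the set of words in $\mathcal{W}^1_n$ starting with $0$; $\mathcal{Z}_0=\{\epsilon\}$. A $1$-Gray code for a set $\mathcal{A}$ of equal-length words is an ordered list of all elements of $\mathcal{A}$, each once, in which consecutive words differ in at most one position. For a list $\mathbb{L}$ and a word $w$, $w\cdot\mathbb{L}$ is the list obtained by prefixing $w$ to every word of $\mathbb{L}$; $\mathbb{L}_1\circ\mathbb{L}_2$ is the concatenation of lists. In a word of prescribed length $n$ written $u(001)^\star$, $(001)^\star$ denotes the prefix of $001001\cdots$ of the length needed to reach total length $n$. *)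

(* Defs.v *)
From mathcomp Require Import all_boot.
Set Implicit Arguments. Unset Strict Implicit. Unset Printing Implicit Defensive.

(* Binary words: seq bool, with false = 0 and true = 1. *)
Definition word := seq bool.

(* w is 1-decreasing: for every maximal run of 0s (length a > 0) together
   with the maximal (possibly empty) run of 1s immediately following it
   (length b), one has a > b.  A decomposition
   w = u ++ 0^a ++ 1^b ++ v is one of "maximal runs" when u is empty or
   ends with 1, v is empty or starts with 0, and (b > 0 or v is empty). *)
Definition one_decreasing (w : word) : Prop :=
  forall (u v : word) (a b : nat),
    w = u ++ nseq a false ++ nseq b true ++ v ->
    0 < a ->
    (u == [::]) || last false u ->
    (v == [::]) || ~~ head true v ->
    (0 < b) || (v == [::]) ->
    b < a.

Definition in_W1 (n : nat) (w : word) : Prop := size w = n /\ one_decreasing w.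

Definition in_Z (n : nat) (w : word) : Prop :=
  if n is 0 then w = [::] else in_W1 n w /\ head true w = false.

Definition hamming (x y : word) : nat :=
  count (fun p : bool * bool => p.1 != p.2) (zip x y).

Definition gray1 (A : word -> Prop) (L : seq word) : Prop :=
  [/\ uniq L, (forall w, w \in L <-> A w) &
      sorted (fun x y => hamming x y <= 1) L].

(* (001)^* truncated/extended to length n *)
Definition pat001 (n : nat) : word := mkseq (fun i => i %% 3 == 2) n.

Definition first_is (L : seq word) (w : word) : Prop :=
  L != [::] /\ head [::] L = w.
Definition last_is (L : seq word) (w : word) : Prop :=
  L != [::] /\ last [::] L = w.

Fixpoint Wlist (Z : nat -> seq word) (n : nat) : seq word :=
  if n is n'.+1 then map (cons true) (Wlist Z n') ++ Z n else [:: [::]].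

(* Main.v *)
Require Import Defs.
From mathcomp Require Import all_boot.

Lemma od_cons w : one_decreasing (true :: w) <-> one_decreasing w.
Proof.
split.
- move=> H u v a b E a0 Hu Hv Hb.
  apply: (H (true :: u) v a b) => //; first by rewrite E.
  by case: u {E} Hu.
- move=> H [|x u] v a b E a0 Hu Hv Hb.
    by case: a a0 E.
  case: E => Ex Ew; subst x.
  apply: (H u v a b Ew a0 _ Hv Hb).
  by case: u {Ew} Hu.
Qed.

Lemma od_nil : one_decreasing [::].
Proof.
move=> [|x u] v [|a] b //= E.
Qed.

Lemma hamming_cons a b x y : hamming (a :: x) (b :: y) = (a != b) + hamming x y.
Proof. by []. Qed.

Lemma hamming_refl x : hamming x x = 0.
Proof. by elim: x => //= a x; rewrite /hamming /= eqxx. Qed.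

Lemma path_ct x s :
  path (fun x y : word => hamming x y <= 1) (true :: x) (map (cons true) s) =
  path (fun x y : word => hamming x y <= 1) x s.
Proof. by elim: s x => //= y s IH x; rewrite IH hamming_cons. Qed.

Lemma mainlem (Z : nat -> seq word) :
  (forall n, 1 <= n ->
     [/\ gray1 (in_Z n) (Z n),
         first_is (Z n) (false :: pat001 n.-1) &
         last_is (Z n) (pat001 n)]) ->
  forall n,
    [/\ gray1 (in_W1 n) (Wlist Z n), Wlist Z n != [::],
        head [::] (Wlist Z n) = nseq n true &
        last [::] (Wlist Z n) = pat001 n].
Proof.
move=> HZ; elim=> [|n [[U M S] ne hd lt]].
  split => //; split => //= w; rewrite inE; split.
    by move/eqP=> ->; split => //; exact: od_nil.
  by case=> /size0nil ->.
have [[UZ MZ SZ] [neZ hdZ] [_ ltZ]] := HZ n.+1 isT.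
have nem : map (cons true) (Wlist Z n) != [::] by case: (Wlist Z n) ne.
split => //=.
- split.
  + rewrite cat_uniq map_inj_uniq ?U ?UZ //=; last by move=> x y [].
    rewrite andbT; apply/hasPn => w /MZ [_ hw]; apply/mapP => [[x _ E]].
    by rewrite E in hw.
  + move=> [|[] w]; rewrite mem_cat.
    * split; last by case.
      case/orP; first by case/mapP.
      by case/MZ => [[]].
    * rewrite mem_map; last by move=> x y [].
      have -> : (true :: w \in Z n.+1) = false.
        by apply/negP => /MZ [_].
      rewrite orbF; split => [/M [H1 H2] | [H1 H2]].
        by split; [rewrite /= H1 | apply/od_cons].
      by apply/M; split; [case: H1 | apply/od_cons].
    * have -> : (false :: w \in map (cons true) (Wlist Z n)) = false.
        by apply/negP => /mapP [].
      rewrite /=; split => [/MZ [] // | H]; apply/MZ; split => //.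
  + case E: (Wlist Z n) ne hd lt S => [//|x s] _ hd lt S.
    rewrite /= cat_path path_ct.
    rewrite /sorted /= in S; rewrite S /=.
    move: hdZ SZ; case: (Z n.+1) neZ => [//|z zs] _ /= -> SZ.
    rewrite SZ andbT last_map.
    have -> : last x s = pat001 n by move: lt; rewrite /=.
    by rewrite hamming_cons hamming_refl.
- by case: (map _ _) nem.
- by case: (Wlist Z n) ne hd => //= x s _ ->.
- rewrite last_cat.
  by case: (Z n.+1) neZ ltZ => //= z zs _ <-; case: (map _ _) nem.
Qed.

Theorem theorem4 (Z : nat -> seq word) :
  (forall n, 1 <= n ->
     [/\ gray1 (in_Z n) (Z n),
         first_is (Z n) (false :: pat001 n.-1) &
         last_is (Z n) (pat001 n)]) ->
  forall n, 1 <= n ->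
    [/\ gray1 (in_W1 n) (Wlist Z n),
        first_is (Wlist Z n) (nseq n true) &
        last_is (Wlist Z n) (pat001 n)].
Proof.
move=> HZ n _; have [G ne hd lt] := @mainlem Z HZ n.
by split.
Qed.
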